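(* Assume the setting in the context (Condition ASM). Fix $c>1$, $\bar c=(c+1)/(c-1)$, and let $\widehat\beta$ be a LASSO solution. If $\lambda\geqslant c\,n\|S\|_\infty$, then $$\|\widehat\beta-\beta_0\|_1\leqslant\frac{(1+2\bar c)\sqrt s}{\kappa_{2\bar c}}\Big[\Big(1+\frac1c\Big)\frac{\lambda\sqrt s}{n\kappa_{\bar c}}+2c_s\Big]+\Big(1+\frac{1}{2\bar c}\Big)\frac{2c}{c-1}\frac{n}{\lambda}c_s^2,$$ where $c_s=0$ in the parametric case $f_i=x_i'\beta_0$.
   Context: Condition ASM: observations $(y_i,z_i)$, $i=1,\dots,n$, $z_i$ fixed, $y_i=f(z_i)+\varepsilon_i$, $\varepsilon_i$ i.i.d. $N(0,\sigma^2)$; $f_i=f(z_i)$, $\mathbb{E}_n[a_i]=n^{-1}\sum_ia_i$; $x_i=P(z_i)\in\mathbb{R}^p$ (including a constant) with $\mathbb{E}_n[x_{ij}^2]=1$. $\beta_0$ is any solution of $\min_\beta\mathbb{E}_n[(f_i-x_i'\beta)^2]+\sigma^2\|\beta\|_0/n$; $s=\|\beta_0\|_0$, $T=\mathrm{support}(\beta_0)$, $c_s=\sqrt{\mathbb{E}_n[(f_i-x_i'\beta_0)^2]}\leqslant K\sigma\sqrt{s/n}$ for an absolute constant $K$. $\|\delta\|_{2,n}=\sqrt{\mathbb{E}_n[(x_i'\delta)^2]}$; $S=2\mathbb{E}_n[x_i\varepsilon_i]$; LASSO: $\widehat\beta\in\arg\min_\beta\mathbb{E}_n[(y_i-x_i'\beta)^2]+\frac\lambda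 n\|\beta\|_1$, $\lambda>0$. $\delta_A$ is $\delta$ with entries outside $A$ set to zero. Restricted eigenvalue: for $C>0$, $\kappa_C=\min\{\sqrt s\|\delta\|_{2,n}/\|\delta_T\|_1:\|\delta_{T^c}\|_1\leqslant C\|\delta_T\|_1,\ \delta_T\neq0\}$. *)

(* Defs.v *)
From HB Require Import structures.
From mathcomp Require Import all_boot all_order all_algebra.
From mathcomp Require Import classical_sets reals.
Set Implicit Arguments. Unset Strict Implicit. Unset Printing Implicit Defensive.
Import Order.TTheory GRing.Theory Num.Theory.
Local Open Scope ring_scope.
Local Open Scope classical_set_scope.

Section Defs.
Variable R : realType.

Definition En (n : nat) (a : 'I_n -> R) : R := (\sum_(i < n) a i) / n%:R.

Definition xdot (n p : nat) (X : 'I_n -> 'I_p -> R) (b : 'I_p -> R) (i : 'I_n) : R :=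
  \sum_(j < p) X i j * b j.

Definition norm1 (p : nat) (b : 'I_p -> R) : R := \sum_(j < p) `|b j|.
Definition norminf (p : nat) (b : 'I_p -> R) : R := \big[Num.max/0]_(j < p) `|b j|.
Definition supp (p : nat) (b : 'I_p -> R) : {set 'I_p} := [set j | b j != 0].
Definition norm0 (p : nat) (b : 'I_p -> R) : nat := #|supp b|.

Definition norm2n (n p : nat) (X : 'I_n -> 'I_p -> R) (d : 'I_p -> R) : R :=
  Num.sqrt (En (fun i => (xdot X d i) ^+ 2)).

Definition restr (p : nat) (A : {set 'I_p}) (d : 'I_p -> R) : 'I_p -> R :=
  fun j => if j \in A then d j else 0.

(* restricted eigenvalue kappa_C (min = inf of the attained values) *)
Definition kappa (n p : nat) (X : 'I_n -> 'I_p -> R) (T : {set 'I_p}) (C : R) : R :=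
  inf [set r | exists d : 'I_p -> R,
         [/\ norm1 (restr (~: T) d) <= C * norm1 (restr T d),
             restr T d <> (fun _ => 0) &
             r = Num.sqrt (#|T|%:R) * norm2n X d / norm1 (restr T d)]].

End Defs.

(* Main.v *)
Require Import Defs.
From HB Require Import structures.
From mathcomp Require Import all_boot all_order all_algebra.
From mathcomp Require Import classical_sets reals.
From mathcomp Require Import ring lra.
Import Order.TTheory GRing.Theory Num.Theory.
Local Open Scope ring_scope.

Lemma En_ext (R : realType) n (F G : 'I_n -> R) :
  (forall i, F i = G i) -> En F = En G.
Proof. by move=> h; rewrite /En (eq_bigr G) // => i _; exact: h. Qed.

Lemma En_comb (R : realType) n (A B C D : 'I_n -> R) (k1 k2 k3 : R) :
  En (fun i => A i + k1 * B i + k2 * C i + k3 * D i)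
  = En A + k1 * En B + k2 * En C + k3 * En D.
Proof. by rewrite /En !big_split /= -!mulr_sumr; ring. Qed.

Lemma En_ge0 (R : realType) n (F : 'I_n -> R) :
  (forall i, 0 <= F i) -> 0 <= En F.
Proof. by move=> h; rewrite /En divr_ge0 // sumr_ge0. Qed.

Lemma En_eq0 (R : realType) n (F : 'I_n -> R) :
  (0 < n)%N -> (forall i, 0 <= F i) -> En F = 0 -> forall i, F i = 0.
Proof.
move=> n0 h /eqP; rewrite /En mulf_eq0 invr_eq0 pnatr_eq0.
have -> : (n == 0)%N = false by case: n n0 {F h}.
rewrite orbF => /eqP s0 i.
by apply: (psumr_eq0P _ s0) => // j _.
Qed.

Arguments En_ext {R n F G}.
Arguments En_ge0 {R n F}.
Arguments En_eq0 {R n F}.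
Arguments En_comb {R n}.

Lemma En_CS (R : realType) n (a b : 'I_n -> R) : (0 < n)%N ->
  En (fun i => a i * b i) <= Num.sqrt (En (fun i => a i ^+ 2)) * Num.sqrt (En (fun i => b i ^+ 2)).
Proof.
move=> n0.
set A := En (fun i => a i ^+ 2); set B := En (fun i => b i ^+ 2).
set C := En (fun i => a i * b i).
have A0 : 0 <= A by apply: En_ge0 => i; exact: sqr_ge0.
have B0 : 0 <= B by apply: En_ge0 => i; exact: sqr_ge0.
set p := Num.sqrt A; set q := Num.sqrt B.
have p0 : 0 <= p := sqrtr_ge0 _. have q0 : 0 <= q := sqrtr_ge0 _.
have pA : p ^+ 2 = A := sqr_sqrtr A0. have qB : q ^+ 2 = B := sqr_sqrtr B0.
have [p00|pn0] := eqVneq p 0.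
  have : A = 0 by rewrite -pA p00 expr2 mulr0.
  move/(En_eq0 n0 (fun i => sqr_ge0 (a i))) => ha.
  rewrite p00 mul0r /C /En (eq_bigr (fun _ => 0)) ?big1 ?mul0r // => i _.
  by move: (ha i) => /eqP; rewrite sqrf_eq0 => /eqP ->; rewrite mul0r.
have [q00|qn0] := eqVneq q 0.
  have : B = 0 by rewrite -qB q00 expr2 mulr0.
  move/(En_eq0 n0 (fun i => sqr_ge0 (b i))) => hb.
  rewrite q00 mulr0 /C /En (eq_bigr (fun _ => 0)) ?big1 ?mul0r // => i _.
  by move: (hb i) => /eqP; rewrite sqrf_eq0 => /eqP ->; rewrite mulr0.
have pq : 0 < p * q by rewrite mulr_gt0 // lt0r ?pn0 ?qn0.
have E : 0 <= En (fun i => (q * a i - p * b i) ^+ 2) by apply: En_ge0 => i; exact: sqr_ge0.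
have E2 : En (fun i => (q * a i - p * b i) ^+ 2) = 2 * (p * q) * (p * q - C).
  rewrite (@En_ext _ _ _ (fun i => (fun _ => 0) i + (q ^+ 2) * (a i ^+ 2) + (- 2 * p * q) * (a i * b i)
     + (p ^+ 2) * (b i ^+ 2))); last by move=> i; ring.
  rewrite (En_comb (fun _ => 0) (fun i => a i ^+ 2) (fun i => a i * b i) (fun i => b i ^+ 2)).
  rewrite -/A -/B -/C /En big1 // mul0r -pA -qB; ring.
move: E; rewrite E2 => E.
have : 0 <= p * q - C.
  rewrite -(pmulr_rge0 _ pq); lra.
lra.
Qed.

Lemma xdot_split (R : realType) n p (X : 'I_n -> 'I_p -> R) (b b0 : 'I_p -> R) i :
  xdot X b i = xdot X b0 i + xdot X (fun j => b j - b0 j) i.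
Proof. by rewrite /xdot -big_split; apply: eq_bigr => j _ /=; ring. Qed.

Lemma En_eps (R : realType) n p (X : 'I_n -> 'I_p -> R) (e : 'I_n -> R) (d : 'I_p -> R) :
  En (fun i => e i * xdot X d i) = \sum_(j < p) d j * En (fun i => X i j * e i).
Proof.
rewrite /En /xdot.
have -> : \sum_(j < p) d j * ((\sum_(i < n) X i j * e i) / n%:R)
   = (\sum_(j < p) d j * (\sum_(i < n) X i j * e i)) / n%:R.
  by rewrite mulr_suml; apply: eq_bigr => j _; ring.
congr (_ / _).
under eq_bigr do rewrite mulr_sumr.
rewrite exchange_big /=; apply: eq_bigr => j _.
rewrite mulr_sumr; apply: eq_bigr => i _; ring.
Qed.

Lemma norm1_split (R : realType) p (T : {set 'I_p}) (d : 'I_p -> R) :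
  norm1 d = norm1 (restr T d) + norm1 (restr (~: T) d).
Proof.
rewrite /norm1 -big_split; apply: eq_bigr => j _ /=.
by rewrite /restr inE; case: (j \in T) => /=; rewrite normr0 ?addr0 ?add0r.
Qed.

Lemma norm1_ge0 (R : realType) p (d : 'I_p -> R) : 0 <= norm1 d.
Proof. by rewrite /norm1 sumr_ge0. Qed.

Lemma norm_diff (R : realType) p (b b0 : 'I_p -> R) :
  norm1 b0 - norm1 b <= norm1 (restr (supp b0) (fun j => b j - b0 j))
                        - norm1 (restr (~: supp b0) (fun j => b j - b0 j)).
Proof.
rewrite /norm1 -!sumrB; apply: ler_sum => j _.
rewrite /restr !inE; case: ifPn => /= h.
  rewrite normr0 subr0.
  have := ler_normD (b0 j - b j) (b j); rewrite subrK distrC; lra.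
move: h; rewrite negbK => /eqP ->; rewrite normr0 subr0 sub0r; lra.
Qed.

Lemma S_bound (R : realType) p (d S : 'I_p -> R) :
  \sum_(j < p) d j * S j <= norminf S * norm1 d.
Proof.
rewrite /norm1 mulr_sumr; apply: ler_sum => j _.
apply: le_trans (ler_norm _) _; rewrite normrM mulrC.
apply: ler_wpM2r => //.
rewrite /norminf; exact: le_bigmax.
Qed.

Lemma kappa_le (R : realType) n p (X : 'I_n -> 'I_p -> R) (T : {set 'I_p}) (C : R)
  (d : 'I_p -> R) :
  norm1 (restr (~: T) d) <= C * norm1 (restr T d) -> norm1 (restr T d) != 0 ->
  kappa X T C * norm1 (restr T d) <= Num.sqrt (#|T|%:R) * norm2n X d.
Proof.
move=> hC hu.
have u0 : 0 < norm1 (restr T d) by rewrite lt0r hu norm1_ge0.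
set E := [set r | exists d : 'I_p -> R,
         [/\ norm1 (restr (~: T) d) <= C * norm1 (restr T d),
             restr T d <> (fun _ => 0) &
             r = Num.sqrt (#|T|%:R) * norm2n X d / norm1 (restr T d)]]%classic.
have hl : has_lbound E.
  exists 0 => r [d' [_ _ ->]].
  by rewrite divr_ge0 ?norm1_ge0 // mulr_ge0 ?sqrtr_ge0 // /norm2n sqrtr_ge0.
have Ed : E (Num.sqrt (#|T|%:R) * norm2n X d / norm1 (restr T d)).
  exists d; split => // h0; move: hu; rewrite h0 /norm1 big1 ?eqxx // => j _.
  by rewrite normr0.
have := ge_inf hl Ed.
rewrite -/(kappa X T C) => hk.
by rewrite -ler_pdivlMr.
Qed.
Arguments xdot_split {R n p}.
Arguments En_eps {R n p}.
Arguments norm1_split {R p}.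
Arguments norm1_ge0 {R p}.
Arguments norm_diff {R p}.
Arguments S_bound {R p}.
Arguments kappa_le {R n p}.
Arguments En_CS {R n}.

Lemma key (R : realType) (a u v lam N s0 k1 k2 cs c : R) :
  1 < c -> 0 < lam -> 0 < N -> 0 <= a -> 0 <= u -> 0 <= v -> 0 <= s0 ->
  0 < k1 -> 0 < k2 -> 0 <= cs ->
  a ^+ 2 <= 2 * cs * a + lam / N / c * (u + v) + lam / N * (u - v) ->
  (v <= (c + 1) / (c - 1) * u -> u != 0 -> k1 * u <= s0 * a) ->
  (v <= 2 * ((c + 1) / (c - 1)) * u -> u != 0 -> k2 * u <= s0 * a) ->
  u + v <= (1 + 2 * ((c + 1) / (c - 1))) * s0 / k2
         * ((1 + c^-1) * (lam * s0) / (N * k1) + 2 * cs)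
       + (1 + (2 * ((c + 1) / (c - 1)))^-1) * (2 * c / (c - 1)) * (N / lam) * cs ^+ 2.
Proof.
move=> c1 lam0 N0 a0 u0 v0 s00 k10 k20 cs0 basic h1 h2.
set cb := (c + 1) / (c - 1).
set L := lam / N.
have L0 : 0 < L by rewrite divr_gt0.
have c0 : 0 < c by lra.
have cm0 : 0 < c - 1 by lra.
have cb0 : 0 < cb by rewrite divr_gt0 //; lra.
have cbE : cb * (c - 1) = c + 1 by rewrite /cb mulfVK //; lra.
have Lc : L / c * c = L by rewrite mulfVK //; lra.
set T1 := (1 + 2 * cb) * s0 / k2 * ((1 + c^-1) * (lam * s0) / (N * k1) + 2 * cs).
set T2 := (1 + (2 * cb)^-1) * (2 * c / (c - 1)) * (N / lam) * cs ^+ 2.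
have E1 : (1 + c^-1) * (lam * s0) / (N * k1) = (L + L / c) * s0 / k1.
  by rewrite /L; field; lra.
have k1i : 0 < k1^-1 by rewrite invr_gt0.
have k2i : 0 < k2^-1 by rewrite invr_gt0.
have ci : 0 < c^-1 by rewrite invr_gt0.
have P1 : 0 <= (1 + 2 * cb) * s0 / k2 by rewrite mulr_ge0 ?mulr_ge0 //; try lra.
have Lc0 : 0 < L / c by rewrite divr_gt0.
have P2 : 0 <= (L + L / c) * s0 / k1 by rewrite mulr_ge0 ?mulr_ge0 //; try lra.
have T10 : 0 <= T1 by rewrite /T1 E1 mulr_ge0 //; lra.
have T20 : 0 <= T2.
  have i2 : 0 < (2 * cb)^-1 by rewrite invr_gt0; lra.
  by rewrite /T2 mulr_ge0 ?mulr_ge0 ?divr_ge0 ?sqr_ge0 ?invr_ge0 //; lra.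
set M := L - L / c.
have M0 : 0 < M.
  have -> : M = L * (c - 1) / c by rewrite /M; field; lra.
  by rewrite mulr_gt0 ?mulr_gt0 ?invr_gt0 //; lra.
have LM : L + L / c = cb * M by rewrite /M /cb; field; lra.
have Bas : a ^+ 2 <= 2 * cs * a + cb * M * u - M * v.
  rewrite -mulrA -LM /M; move: basic; rewrite -/L; lra.
have cbM0 : 0 < cb * M by rewrite mulr_gt0.
have sq_le : forall X, 0 <= X -> a ^+ 2 <= X * a -> a <= X.
  move=> X X0 h; have [->|an0] := eqVneq a 0; first by [].
  have ap : 0 < a by rewrite lt0r an0.
  by rewrite -(ler_pM2r ap) -expr2.
have [vle|vgt] := lerP v (2 * cb * u).
  have [u00|un0] := eqVneq u 0.
    move: vle; rewrite u00 mulr0 => vle.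
    have -> : v = 0 by lra.
    lra.
  have hk2 := h2 vle un0.
  have ha : a <= cb * M * s0 / k1 + 2 * cs.
    have Q0 : 0 <= cb * M * s0 / k1 := divr_ge0 (mulr_ge0 (ltW cbM0) s00) (ltW k10).
    have [vle1|vgt1] := lerP v (cb * u).
      have hk1 := h1 vle1 un0.
      have : cb * M * u <= cb * M * s0 / k1 * a.
        have -> : cb * M * s0 / k1 * a = cb * M * (s0 * a) / k1 by field; lra.
        rewrite ler_pdivlMr //.
        have -> : cb * M * u * k1 = cb * M * (k1 * u) by ring.
        by apply: ler_wpM2l => //; exact: ltW.
      move=> hh; apply: sq_le; first lra.
      have : M * v >= 0 by rewrite mulr_ge0 //; lra.
      lra.
    have : cb * M * u - M * v <= 0.
      have : M * (cb * u) <= M * v by rewrite ler_pM2l //; lra.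
      lra.
    move=> hh; suff : a <= 2 * cs by lra.
    apply: sq_le; first lra.
    lra.
  have hu : u <= s0 * a / k2 by rewrite ler_pdivlMr // mulrC.
  have : (1 + 2 * cb) * (s0 * a / k2) <= T1.
    rewrite /T1 E1 LM.
    have -> : (1 + 2 * cb) * (s0 * a / k2) = (1 + 2 * cb) * s0 / k2 * a by field; lra.
    by apply: ler_wpM2l.
  have : (1 + 2 * cb) * u <= (1 + 2 * cb) * (s0 * a / k2) by apply: ler_wpM2l => //; lra.
  lra.
have hcs : 0 <= (a - cs) ^+ 2 := sqr_ge0 _.
have Mv : M * v <= 2 * cs ^+ 2.
  have : M * (cb * u) <= M * (v / 2) by apply: ler_wpM2l; lra.
  move: hcs; rewrite sqrrB; lra.
have hv : v <= (2 * c / (c - 1)) * (N / lam) * cs ^+ 2.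
  have -> : (2 * c / (c - 1)) * (N / lam) * cs ^+ 2 = 2 * cs ^+ 2 / M.
    rewrite /M /L; field.
    have h : 0 < lam * (c - 1) by rewrite mulr_gt0 //; lra.
    by apply/and5P; split; apply/negP => /eqP; lra.
  by rewrite ler_pdivlMr // mulrC.
have hu : u <= (2 * cb)^-1 * v.
  have c2 : 0 < 2 * cb by lra.
  by rewrite [_^-1 * v]mulrC ler_pdivlMr //; lra.
have i2 : 0 < (2 * cb)^-1 by rewrite invr_gt0; lra.
have : (1 + (2 * cb)^-1) * v <= T2.
  rewrite /T2.
  have -> : (1 + (2 * cb)^-1) * (2 * c / (c - 1)) * (N / lam) * cs ^+ 2
     = (1 + (2 * cb)^-1) * ((2 * c / (c - 1)) * (N / lam) * cs ^+ 2) by ring.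
  by apply: ler_wpM2l => //; lra.
lra.
Qed.
Lemma basic_alg (R : realType) (A B E W x1 x0 y z cs a : R) :
  A + (-2) * B + (-2) * E + 1 * W + x1 <= A + x0 -> B <= cs * a -> 2 * E <= y ->
  x0 - x1 <= z -> W <= 2 * cs * a + y + z.
Proof. move=> h1 h2 h3 h4; lra. Qed.

Arguments basic_alg {R A B E W x1 x0 y z cs a}.

Theorem lemma7 (R : realType) (n p : nat) (X : 'I_n -> 'I_p -> R)
  (f eps : 'I_n -> R) (sigma K : R) (beta0 betahat : 'I_p -> R) (lambda c : R) :
  (0 < n)%N ->
  (* x_i includes a constant *)
  (exists j0 : 'I_p, forall i, X i j0 = 1) ->
  (* normalization E_n[x_ij^2] = 1 *)
  (forall j, En (fun i => X i j ^+ 2) = 1) ->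
  0 < sigma ->
  (* beta0 solves min_b E_n[(f_i - x_i'b)^2] + sigma^2 ||b||_0 / n *)
  (forall b : 'I_p -> R,
      En (fun i => (f i - xdot X beta0 i) ^+ 2) + sigma ^+ 2 * (norm0 beta0)%:R / n%:R
   <= En (fun i => (f i - xdot X b i) ^+ 2) + sigma ^+ 2 * (norm0 b)%:R / n%:R) ->
  (* c_s <= K sigma sqrt(s/n) *)
  Num.sqrt (En (fun i => (f i - xdot X beta0 i) ^+ 2))
    <= K * sigma * Num.sqrt ((norm0 beta0)%:R / n%:R) ->
  0 < lambda ->
  (* betahat is a LASSO solution, with y_i = f_i + eps_i *)
  (forall b : 'I_p -> R,
      En (fun i => (f i + eps i - xdot X betahat i) ^+ 2) + lambda / n%:R * norm1 betahat
   <= En (fun i => (f i + eps i - xdot X b i) ^+ 2) + lambda / n%:R * norm1 b) ->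
  1 < c ->
  (* lambda >= c n ||S||_inf, S = 2 E_n[x_i eps_i] *)
  c * n%:R * norminf (fun j => 2 * En (fun i => X i j * eps i)) <= lambda ->
  let T := supp beta0 in
  let s : R := (#|T|)%:R in
  let cs := Num.sqrt (En (fun i => (f i - xdot X beta0 i) ^+ 2)) in
  let cbar := (c + 1) / (c - 1) in
  0 < kappa X T cbar ->
  0 < kappa X T (2 * cbar) ->
  norm1 (fun j => betahat j - beta0 j)
    <= (1 + 2 * cbar) * Num.sqrt s / kappa X T (2 * cbar)
         * ((1 + c^-1) * (lambda * Num.sqrt s) / (n%:R * kappa X T cbar) + 2 * cs)
       + (1 + (2 * cbar)^-1) * (2 * c / (c - 1)) * (n%:R / lambda) * cs ^+ 2.
Proof.
Proof.
move=> n0 _ _ _ _ _ lam0 lasso c1 Sb T s cs cb k1p k2p.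
set d := fun j => betahat j - beta0 j.
set u := norm1 (restr T d); set v := norm1 (restr (~: T) d).
set a := norm2n X d.
set N := (n%:R : R).
have N0 : 0 < N by rewrite ltr0n.
rewrite (norm1_split T d) -/u -/v.
have W0 : 0 <= En (fun i => xdot X d i ^+ 2) by apply: En_ge0 => i; exact: sqr_ge0.
have aW : a ^+ 2 = En (fun i => xdot X d i ^+ 2) by rewrite /a /norm2n sqr_sqrtr.
have e1 : En (fun i => (f i + eps i - xdot X betahat i) ^+ 2)
   = En (fun i => (f i + eps i - xdot X beta0 i) ^+ 2)
     + (-2) * En (fun i => (f i - xdot X beta0 i) * xdot X d i)
     + (-2) * En (fun i => eps i * xdot X d i)
     + 1 * En (fun i => xdot X d i ^+ 2).
  rewrite -En_comb; apply: En_ext => i; rewrite (xdot_split X betahat beta0 i) -/d; ring.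
have CS : En (fun i => (f i - xdot X beta0 i) * xdot X d i) <= cs * a.
  exact: En_CS.
have Sinf : norminf (fun j => 2 * En (fun i => X i j * eps i)) <= lambda / N / c.
  rewrite ler_pdivlMr; last lra.
  rewrite ler_pdivlMr //; move: Sb; rewrite -/N; lra.
have EE : 2 * En (fun i => eps i * xdot X d i) <= lambda / N / c * (u + v).
  rewrite En_eps mulr_sumr.
  have -> : \sum_(j < p) 2 * (d j * En (fun i => X i j * eps i))
     = \sum_(j < p) d j * (fun j => 2 * En (fun i => X i j * eps i)) j.
    by apply: eq_bigr => j _ /=; ring.
  apply: le_trans (S_bound _ _) _.
  rewrite (norm1_split T d) -/u -/v; apply: ler_wpM2r => //.
  by rewrite addr_ge0 ?norm1_ge0.
have ND := norm_diff betahat beta0.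
rewrite -/T -/d -/u -/v in ND.
have ND2 : lambda / N * (norm1 beta0 - norm1 betahat) <= lambda / N * (u - v).
  by apply: ler_wpM2l => //; rewrite divr_ge0 //; lra.
have lb := lasso beta0.
rewrite e1 -/N in lb.
rewrite mulrBr in ND2.
have basic : a ^+ 2 <= 2 * cs * a + lambda / N / c * (u + v) + lambda / N * (u - v).
  rewrite aW; exact: (basic_alg lb CS EE ND2).
apply: (@key R a u v lambda N (Num.sqrt s) (kappa X T cb) (kappa X T (2 * cb)) cs c) => //.
- exact: sqrtr_ge0.
- exact: norm1_ge0.
- exact: norm1_ge0.
- exact: sqrtr_ge0.
- exact: sqrtr_ge0.
- by move=> hv hu; apply: kappa_le.
- by move=> hv hu; apply: kappa_le.
Qed.
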